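(* Let $n \ge 1$ be an integer and let $t \in \overline{D}(1+2^{2n-1}, 2^{-2n})$. Let $z \in \mathbb{C}_2$ satisfy $|z + \tfrac12| = 2^k$, where $k$ is a real number with $-2n < k < 1$. Then $|f_t(z) + \tfrac12| = 2^{k+2}$.
   Context: Let $|\cdot|$ denote the $2$-adic absolute value on $\mathbb{C}_2$, normalized by $|2| = 1/2$. The notation $\overline{D}(a,\delta)$ denotes the closed disk $\{z \in \mathbb{C}_2 : |z-a| \le \delta\}$. For $t \in \mathbb{C}_2$, let $f_t(z) = -\tfrac32 t(-2z^3+3z^2)+1$. *)

(* Defs.v *)
From HB Require Import structures.
From mathcomp Require Import all_boot all_order all_algebra.
From mathcomp Require Import reals exp.
Set Implicit Arguments. Unset Strict Implicit. Unset Printing Implicit Defensive.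
Import Order.TTheory GRing.Theory Num.Theory.
Local Open Scope ring_scope.

Definition nonarch_abs (K : fieldType) (R : realType) (a : K -> R) : Prop :=
  [/\ (forall x, 0 <= a x),
      (forall x, a x = 0 <-> x = 0),
      (forall x y, a (x * y) = a x * a y)
    & (forall x y, a (x + y) <= Num.max (a x) (a y))].

Definition abs_complete (K : fieldType) (R : realType) (a : K -> R) : Prop :=
  forall u : nat -> K,
    (forall e : R, 0 < e -> exists N : nat, forall m n : nat,
        (N <= m)%N -> (N <= n)%N -> a (u m - u n) < e) ->
    exists l : K, forall e : R, 0 < e -> exists N : nat, forall n : nat,
        (N <= n)%N -> a (u n - l) < e.

Definition cdisk (K : fieldType) (R : realType) (a : K -> R) (c : K) (d : R) : K -> Prop :=
  fun z => a (z - c) <= d.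

Definition f_t (K : fieldType) (t z : K) : K :=
  - (3%:R / 2%:R) * t * (- 2%:R * z ^+ 3 + 3%:R * z ^+ 2) + 1.

(* Main.v *)
Require Import Defs.
From HB Require Import structures.
From mathcomp Require Import all_boot all_order all_algebra.
From mathcomp Require Import reals exp.
From mathcomp Require Import ring lra zify.
Import Order.TTheory GRing.Theory Num.Theory.
Local Open Scope ring_scope.
Lemma pow2_lt (R : realType) (x y : R) : x < y -> 2%:R `^ x < 2%:R `^ y.
Proof.
move=> xy; rewrite /powR pnatr_eq0 /= ltr_expR ltr_pM2r //.
by rewrite ln_gt0 // ltr1n.
Qed.

Section A.
Variables (R : realType) (K : fieldType) (a : K -> R) (Ha : nonarch_abs a).

Lemma a1 : a 1 = 1.
Proof.
case: Ha => h0 h1 hM _.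
have : a 1 = a 1 * a 1 by rewrite -hM mulr1.
have : a 1 != 0 by apply/eqP => /h1/eqP; rewrite oner_eq0.
move=> nz e; apply: (mulIf nz); rewrite mul1r; exact/esym.
Qed.

Lemma aN x : a (- x) = a x.
Proof.
case: Ha => h0 h1 hM _.
have e : a (-1) * a (-1) = 1 by rewrite -hM mulrNN mulr1 a1.
have : a (-1) = 1.
  have := h0 (-1); nra.
by move=> e1; rewrite -mulN1r hM e1 mul1r.
Qed.

Lemma aX x m : a (x ^+ m) = a x ^+ m.
Proof.
case: Ha => h0 h1 hM _.
elim: m => [|m IH]; first by rewrite !expr0 a1.
by rewrite !exprS hM IH.
Qed.

Lemma aV x : x != 0 -> a (x^-1) = (a x)^-1.
Proof.
case: Ha => h0 h1 hM _ nz.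
have e : a x * a (x^-1) = 1 by rewrite -hM mulfV // a1.
have ax : a x != 0 by apply/eqP => /h1/eqP; rewrite (negbTE nz).
by apply: (mulfI ax); rewrite e mulfV.
Qed.

Lemma aD_le x y : a (x + y) <= Num.max (a x) (a y).
Proof. by case: Ha. Qed.

Lemma a_strict x y : a x < a y -> a (x + y) = a y.
Proof.
move=> lt; apply/eqP; rewrite eq_le; apply/andP; split.
  by have := aD_le x y; rewrite max_r // ltW.
have := aD_le (x + y) (- x); rewrite [x + y]addrC addrK aN => h.
move: h; rewrite /Num.max; case: ifP => // _ h.
by move: (le_lt_trans h lt); rewrite ltxx.
Qed.

Lemma aD3_lt x y z c : a x < c -> a y < c -> a z < c -> a (x + y + z) < c.
Proof.
move=> hx hy hz; apply: le_lt_trans (aD_le _ _) _.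
rewrite gt_max hz andbT; apply: le_lt_trans (aD_le _ _) _.
by rewrite gt_max hx hy.
Qed.
End A.

Theorem lemma1 (R : realType) (K : closedFieldType) (a : K -> R)
  (Ha : nonarch_abs a) (Hcomplete : abs_complete a) (H2 : a 2%:R = 2%:R^-1)
  (n : nat) (hn : (1 <= n)%N) (t : K)
  (ht : cdisk a (1 + 2%:R ^+ (2 * n).-1) (2%:R ^- (2 * n)) t)
  (z : K) (k : R) (hk1 : - ((2 * n)%:R) < k) (hk2 : k < 1)
  (hz : a (z + 2%:R^-1) = 2%:R `^ k) :
  a (f_t t z + 2%:R^-1) = 2%:R `^ (k + 2%:R).
Proof.
have [h0 h1 hM hD] := Ha.
have nz2 : (2%:R : K) != 0.
  apply/eqP => e; move: H2; rewrite e (proj2 (h1 0) erefl) => /eqP.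
  by rewrite eq_sym invr_eq0 pnatr_eq0.
have a2i : a (2%:R^-1) = 2%:R by rewrite aV // H2 invrK.
have a3 : a 3%:R = 1.
  rewrite -addn1 natrD a_strict // ?a1 // H2 invf_lt1 // ?ltr1n //.
set m := (2 * n).-1.
have em : (2 * n = m.+1)%N by rewrite /m prednK // muln_gt0 hn.
set c : K := 2%:R ^+ m.
have ac : a c = (2%:R ^+ m)^-1 by rewrite (@aX _ _ _ Ha) H2 exprVn.
set q : R := 2%:R ^+ m.
have q1 : 1 <= q by rewrite /q exprn_ege1 // ler1n.
have at1 : a (t - 1) = q^-1.
  have -> : t - 1 = (t - (1 + c)) + c by ring.
  rewrite a_strict // ac; apply: le_lt_trans ht _.
  rewrite em exprS invfM.
  have : 0 < (2%:R:R) ^- m by rewrite invr_gt0 exprn_gt0.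
  lra.
have at_ : a t = 1.
  have -> : t = (t - 1) + 1 by ring.
  have q1' : 1 < q by rewrite /q exprn_egt1 ?ltr1n //; lia.
  rewrite a_strict // ?a1 // at1 invf_lt1 //; lra.
set w := z + 2%:R^-1.
set p : R := 2%:R `^ k.
have p0 : 0 < p by rewrite powR_gt0 // ltr0n.
have p2 : p < 2%:R.
  by rewrite /p -[X in _ < X]powRr1 ?ler0n //; apply: pow2_lt.
have pq : q^-1 < 2%:R * p.
  have : 2%:R `^ (- (2 * n)%:R) < p.
    exact: pow2_lt.
  rewrite powR_invn ?ler0n // em exprS invfM -/q.
  have : 0 < q^-1 by rewrite invr_gt0; lra.
  lra.
have -> : f_t t z + 2%:R^-1 =
   ((3%:R * 2%:R^-1 * (1 - t) + - (3%:R * 3%:R * t * w ^+ 2)) + 3%:R * t * w ^+ 3)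
   + 3%:R ^+ 3 * 2%:R^-1 ^+ 2 * t * w.
  rewrite /f_t /w; field; exact: nz2.
have aw : a w = p by [].
have aY : a (3%:R ^+ 3 * 2%:R^-1 ^+ 2 * t * w) = 4%:R * p.
  rewrite !hM a3 a2i at_ aw; lra.
rewrite a_strict // ?aY.
  rewrite powRD; last by rewrite implybE pnatr_eq0 orbT.
  rewrite powR_mulrn ?ler0n // -/p; lra.
apply: aD3_lt => //.
- rewrite !hM a3 a2i -(@aN _ _ _ Ha) opprB at1; lra.
- rewrite (@aN _ _ _ Ha) !hM a3 at_ aw; nra.
- rewrite !hM a3 at_ aw; nra.
Qed.
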